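(* Suppose the nilpotent subalgebra $N=\mathrm{span}_{\mathbb{C}}\{I_{m+1},\dots,I_n\}$ of $\mathbb{A}_n^m$ is a zero algebra, i.e. $I_rI_s=0$ for all $r,s\in\{m+1,\dots,n\}$. Then for every circle $C$ as described in the context, $\lambda:=\int_C\zeta^{-1}\,d\zeta=2\pi i$ (that is, $2\pi i$ times the unit $1$ of $\mathbb{A}_n^m$).
   Context: Fix natural numbers $m\le n$. $\mathbb{A}_n^m$ is a commutative associative algebra with unit over $\mathbb{C}$ with a basis $\{I_k\}_{k=1}^n$ satisfying: (1) for $r,s\in\{1,\dots,m\}$, $I_rI_s=0$ if $r\ne s$ and $I_rI_r=I_r$; (2) for $r,s\in\{m+1,\dots,n\}$, $I_rI_s=\sum_{k=\max\{r,s\}+1}^{n}\Upsilon^{s}_{r,k}I_k$ with constants $\Upsilon^s_{r,k}\in\mathbb{C}$; (3) for each $s\in\{m+1,\dots,n\}$ there is a unique $u_s\in\{1,\dots,m\}$ such that for $r\in\{1,\dots,m\}$, $I_rI_s=I_s$ if $r=u_s$ and $0$ otherwise. Unit $1=\sum_{u=1}^mI_u$; $\mathbb{A}_n^m=S\oplus_sN$ with $S=\mathrm{span}\{I_1,\dots,I_m\}$ semisimple and $N=\mathrm{span}\{I_{m+1},\dots,I_n\}$ nilpotent. $f_u(\sum_k\lambda_kI_k)=\lambda_u$. Let $e_1=1$, $e_2=\sum_ka_kI_k$, $e_3=\sum_kb_kI_k$ ($a_k,b_k\in\mathbb{C}$) be linearly independent over $\mathbb{R}$; $\zeta=xe_1+ye_2+ze_3$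 ($x,y,z\in\mathbb{R}$), $E_3$ their real span. Standing assumption: $f_u(E_3)=\mathbb{C}$ for all $u=1,\dots,m$. $\zeta$ is non-invertible exactly when $(x,y,z)$ lies on one of the lines $L_u=\{x+y\,\mathrm{Re}\,a_u+z\,\mathrm{Re}\,b_u=0,\ y\,\mathrm{Im}\,a_u+z\,\mathrm{Im}\,b_u=0\}$. The circle: $C\subset E_3$ is $C=\{xe_1+ye_2+ze_3:(x,y,z)\in C'\}$ for a Euclidean circle $C'\subset\mathbb{R}^3$ of radius $R>0$ centered at the origin, such that for every $u=1,\dots,m$ the image $f_u(C)$ is a positively oriented closed Jordan curve in $\mathbb{C}$ bounding a domain containing $0$ (so $C$ avoids $\bigcup_uL_u$). Integral: for a Jordan rectifiable curve $\gamma$ and continuous $\Psi=\sum_k(U_k+iV_k)I_k$ on $\gamma_\zeta$, $\int_{\gamma_\zeta}\Psi d\zeta:=\sum_kI_k\int_\gamma(U_k+iV_k)dx+\sum_ke_2I_k\int_\gamma(U_k+iV_k)dy+\sum_ke_3I_k\int_\gamma(U_k+iV_k)dz$. *)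

(* Defs.v *)
From Stdlib Require Import Reals Lra Arith ClassicalEpsilon.
From Coquelicot Require Import Coquelicot.
Open Scope R_scope.
Open Scope C_scope.

Fixpoint sumC (n : nat) (f : nat -> C) : C :=
  match n with
  | O => 0
  | S n' => sumC n' f + f n
  end.

(* An element of A_n^m is given by its coordinates in the basis I_1..I_n;
   we represent it as a function nat -> C whose relevant entries are 1..n. *)
Definition elt := nat -> C.

Definition ezero : elt := fun _ => 0.
Definition eadd (a b : elt) : elt := fun k => a k + b k.
Definition escal (c : C) (a : elt) : elt := fun k => c * a k.
Definition inrange (n k : nat) : bool := andb (1 <=? k)%nat (k <=? n)%nat.

Definition basis (r : nat) : elt := fun k => if Nat.eqb k r then 1 else 0.

Definition vec (n : nat) (c : nat -> C) : elt :=
  fun k => if inrange n k then c k else 0.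

(* Multiplication table of A_n^m:
   u s = u_s, Ups s r k = Upsilon^s_{r,k}. *)
Definition basis_mul (m n : nat) (u : nat -> nat) (Ups : nat -> nat -> nat -> C)
  (r s : nat) : elt :=
  if (r <=? m)%nat then
    if (s <=? m)%nat then (if Nat.eqb r s then basis r else ezero)
    else (if Nat.eqb r (u s) then basis s else ezero)
  else
    if (s <=? m)%nat then (if Nat.eqb s (u r) then basis r else ezero)
    else (fun k => if andb (Nat.max r s <? k)%nat (k <=? n)%nat then Ups s r k else 0).

Definition emul (m n : nat) (u : nat -> nat) (Ups : nat -> nat -> nat -> C)
  (a b : elt) : elt :=
  fun k => sumC n (fun r => sumC n (fun s => a r * b s * basis_mul m n u Ups r s k)).

Definition eone (m : nat) : elt := fun k => if inrange m k then 1 else 0.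

Definition fu (a : elt) (v : nat) : C := a v.

(* A (chosen) inverse of a, when a is invertible; junk value 0 otherwise. *)
Definition einv (m n : nat) (u : nat -> nat) (Ups : nat -> nat -> nat -> C)
  (a : elt) : elt :=
  match excluded_middle_informative (exists b, emul m n u Ups a b = eone m) with
  | left h => proj1_sig (constructive_indefinite_description _ h)
  | right _ => ezero
  end.

Definition CInt (f : R -> C) (lo hi : R) : C :=
  (RInt (fun t => fst (f t)) lo hi, RInt (fun t => snd (f t)) lo hi).

(* Line integral  int_gamma F dx_j  along a parametrized curve t in [0,2pi]
   whose j-th real coordinate is g; F is the integrand evaluated along the curve. *)
Definition line_int (F : R -> C) (g : R -> R) : C :=
  CInt (fun t => RtoC (Derive g t) * F t) 0 (2 * PI)%R.

(* The integral  int_{gamma_zeta} Psi dzeta  of the paper, for a curve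
   gamma(t) = (gx t, gy t, gz t), t in [0, 2 pi]:
   sum_k I_k int (Psi_k) dx + sum_k e2 I_k int (Psi_k) dy + sum_k e3 I_k int (Psi_k) dz. *)
Definition hyper_int (m n : nat) (u : nat -> nat) (Ups : nat -> nat -> nat -> C)
  (e2 e3 : elt) (Psi : R -> elt) (gx gy gz : R -> R) : elt :=
  fun k =>
    sumC n (fun j =>
      basis j k * line_int (fun t => Psi t j) gx
      + emul m n u Ups e2 (basis j) k * line_int (fun t => Psi t j) gy
      + emul m n u Ups e3 (basis j) k * line_int (fun t => Psi t j) gz).

(* zeta = x e1 + y e2 + z e3 with e1 = 1 *)
Definition zeta (m : nat) (e2 e3 : elt) (x y z : R) : elt :=
  eadd (escal (RtoC x) (eone m)) (eadd (escal (RtoC y) e2) (escal (RtoC z) e3)).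

Definition jordan_on (w : R -> C) : Prop :=
  forall s t, 0 <= s < 2 * PI -> 0 <= t < 2 * PI -> w s = w t -> s = t.

(* w is positively oriented around 0 with winding number 1: 0 is not on the
   curve and a continuous argument of w increases by exactly 2 pi. *)
Definition winds_once_positively (w : R -> C) : Prop :=
  (forall t, 0 <= t <= 2 * PI -> w t <> 0) /\
  exists theta : R -> R,
    (forall t, 0 <= t <= 2 * PI ->
        filterlim theta (within (fun s => 0 <= s <= 2 * PI) (locally t)) (locally (theta t))) /\
    (forall t, 0 <= t <= 2 * PI ->
        w t = RtoC (Cmod (w t)) * (cos (theta t), sin (theta t))) /\
    (theta (2 * PI) - theta 0 = 2 * PI)%R.

(* Main.v *)
Require Import Defs.
From Stdlib Require Import Reals.
From Coquelicot Require Import Coquelicot.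
From Stdlib Require Import Lra Lia FunctionalExtensionality ClassicalEpsilon.
Open Scope R_scope.
Open Scope C_scope.
Open Scope R_scope.
Open Scope C_scope.

Lemma sumC_zero n (f : nat -> C) : (forall i, (1<=i<=n)%nat -> f i = 0) -> sumC n f = 0.
Proof.
  induction n; intros H; simpl; [reflexivity|].
  rewrite IHn by (intros; apply H; lia). rewrite H by lia. ring.
Qed.

Lemma sumC_single n (f : nat -> C) j : (1<=j<=n)%nat ->
  (forall i, (1<=i<=n)%nat -> i<>j -> f i = 0) -> sumC n f = f j.
Proof.
  induction n; intros Hj H; [lia|]. simpl.
  destruct (Nat.eq_dec j (S n)) as [->|Hne].
  - rewrite sumC_zero by (intros; apply H; lia). ring.
  - rewrite IHn by (try lia; intros; apply H; lia). rewrite (H (S n)) by lia. ring.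
Qed.

Lemma sumC_two n (f : nat -> C) j1 j2 : (1<=j1<=n)%nat -> (1<=j2<=n)%nat -> j1 <> j2 ->
  (forall i, (1<=i<=n)%nat -> i<>j1 -> i<>j2 -> f i = 0) -> sumC n f = f j1 + f j2.
Proof.
  induction n; intros Hj1 Hj2 Hne H; [lia|]. simpl.
  destruct (Nat.eq_dec j1 (S n)) as [->|Hne1].
  - rewrite (sumC_single n f j2) by (try lia; intros; apply H; lia). ring.
  - destruct (Nat.eq_dec j2 (S n)) as [->|Hne2].
    + rewrite (sumC_single n f j1) by (try lia; intros; apply H; lia). ring.
    + rewrite IHn by (try lia; intros; apply H; lia). rewrite (H (S n)) by lia. ring.
Qed.

Ltac bash :=
  unfold basis_mul, basis, ezero in *;
  repeat match goal with
  | |- context [Nat.leb ?a ?b] => destruct (Nat.leb_spec a b)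
  | |- context [Nat.ltb ?a ?b] => destruct (Nat.ltb_spec a b)
  | |- context [Nat.eqb ?a ?b] => destruct (Nat.eqb_spec a b)
  end; simpl; try subst; try lia; try ring.

Section Alg.
Variables (m n : nat) (u : nat -> nat) (Ups : nat -> nat -> nat -> C).
Hypothesis Hu : forall s, (m < s <= n)%nat -> (1 <= u s <= m)%nat.
Hypothesis Hmn : (m <= n)%nat.

Lemma emul_basis r s k : (1<=r<=n)%nat -> (1<=s<=n)%nat ->
  emul m n u Ups (basis r) (basis s) k = basis_mul m n u Ups r s k.
Proof.
  intros Hr Hs. unfold emul; cbv beta.
  etransitivity; [apply (sumC_single n _ r Hr)|].
  1:{ intros i Hi Hir. apply sumC_zero. intros j Hj. unfold basis.
      destruct (Nat.eqb_spec i r); [lia|]. ring. }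
  etransitivity; [apply (sumC_single n _ s Hs)|].
  1:{ intros i Hi Hir. unfold basis at 2. destruct (Nat.eqb_spec i s); [lia|]. ring. }

  unfold basis. rewrite !Nat.eqb_refl. ring.
Qed.

Hypothesis Hz : forall r s k, (m < r <= n)%nat -> (m < s <= n)%nat ->
  basis_mul m n u Ups r s k = 0.

Lemma bm_zero r s k : (1<=r<=n)%nat -> (1<=s<=n)%nat ->
  ~ ((r = k /\ s = k /\ (k <= m)%nat) \/ (r = u k /\ s = k /\ (m < k)%nat) \/ (s = u k /\ r = k /\ (m<k)%nat)) ->
  basis_mul m n u Ups r s k = 0.
Proof.
  intros Hr Hs Hn.
  destruct (Compare_dec.le_lt_dec r m); destruct (Compare_dec.le_lt_dec s m).
  - bash.
  - assert (Hus := Hu s ltac:(lia)). bash.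
  - assert (Hur := Hu r ltac:(lia)). bash.
  - apply Hz; lia.
Qed.

Lemma emul_low x y k : (1<=k<=m)%nat -> emul m n u Ups x y k = x k * y k.
Proof.
  intros Hk. unfold emul; cbv beta.
  etransitivity; [apply (sumC_single n _ k ltac:(lia))|].
  1:{ intros i Hi Hik. apply sumC_zero. intros j Hj. rewrite bm_zero by (auto; lia). ring. }
  etransitivity; [apply (sumC_single n _ k ltac:(lia))|].
  1:{ intros i Hi Hik. rewrite bm_zero by (auto; lia). ring. }
  bash.
Qed.

Lemma emul_high x y k : (m<k<=n)%nat -> emul m n u Ups x y k = x (u k) * y k + x k * y (u k).
Proof.
  intros Hk. assert (Huk := Hu k Hk). unfold emul; cbv beta.
  etransitivity; [apply (sumC_two n _ (u k) k ltac:(lia) ltac:(lia) ltac:(lia))|].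
  1:{ intros i Hi H1 H2. apply sumC_zero. intros j Hj. rewrite bm_zero by (auto; lia). ring. }
  f_equal.
  - etransitivity; [apply (sumC_single n _ k ltac:(lia))|].
    1:{ intros i Hi Hik. rewrite bm_zero by (auto; lia). ring. }
    bash.
  - etransitivity; [apply (sumC_single n _ (u k) ltac:(lia))|].
    1:{ intros i Hi Hik. rewrite bm_zero by (auto; lia). ring. }
    bash.
Qed.

Lemma emul_out x y k : ~ (1<=k<=n)%nat -> emul m n u Ups x y k = 0.
Proof.
  intros Hk. unfold emul; cbv beta. apply sumC_zero. intros i Hi. apply sumC_zero. intros j Hj.
  rewrite bm_zero by (auto; lia). ring.
Qed.
End Alg.


Lemma eone_low m k : (1<=k<=m)%nat -> eone m k = 1.
Proof. intros H. unfold eone, inrange. destruct (Nat.leb_spec 1 k); destruct (Nat.leb_spec k m); simpl; try lia; reflexivity. Qed.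
Lemma eone_high m k : ~ (1<=k<=m)%nat -> eone m k = 0.
Proof. intros H. unfold eone, inrange. destruct (Nat.leb_spec 1 k); destruct (Nat.leb_spec k m); simpl; try lia; reflexivity. Qed.


Section Inv.
Variables (m n : nat) (u : nat -> nat) (Ups : nat -> nat -> nat -> C).
Hypothesis Hu : forall s, (m < s <= n)%nat -> (1 <= u s <= m)%nat.
Hypothesis Hmn : (m <= n)%nat.
Hypothesis Hz : forall r s k, (m < r <= n)%nat -> (m < s <= n)%nat ->
  basis_mul m n u Ups r s k = 0.

Lemma einv_spec (x : elt) : (forall v, (1<=v<=m)%nat -> x v <> 0) ->
  (forall k, (1<=k<=m)%nat -> einv m n u Ups x k = / x k) /\
  (forall k, (m<k<=n)%nat -> einv m n u Ups x k = - x k / (x (u k) * x (u k))).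
Proof.
  intros Hx. unfold einv.
  destruct excluded_middle_informative as [h|h].
  - destruct (constructive_indefinite_description _ h) as [b Hb]. simpl.
    assert (L : forall k, (1<=k<=m)%nat -> b k = / x k).
    { intros k Hk. assert (E := f_equal (fun f => f k) Hb). simpl in E.
      rewrite (emul_low m n u Ups Hu Hmn Hz) in E by lia. rewrite eone_low in E by lia.
      specialize (Hx k Hk). replace (b k) with (/ x k * (x k * b k)) by (field; auto). rewrite E. ring. }
    split; auto.
    intros k Hk. assert (Huk := Hu k Hk).
    assert (E := f_equal (fun f => f k) Hb). simpl in E.
    rewrite (emul_high m n u Ups Hu Hmn Hz) in E by lia. rewrite eone_high in E by lia.
    rewrite (L (u k) Huk) in E.
    specialize (Hx (u k) Huk).
    replace (b k) with (/ x (u k) * (x (u k) * b k)) by (field; auto).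
    replace (x (u k) * b k) with (- (x k * / x (u k))).
    2:{ transitivity ((x (u k) * b k + x k * / x (u k)) - x k * / x (u k)); [rewrite E|]; ring. }
    field. auto.
  - exfalso. apply h.
    exists (fun k => if (k <=? m)%nat then / x k else - x k / (x (u k) * x (u k))).
    apply functional_extensionality. intros k.
    destruct (Compare_dec.le_lt_dec 1 k); [destruct (Compare_dec.le_lt_dec k m)|].
    + rewrite (emul_low m n u Ups Hu Hmn Hz) by lia. rewrite eone_low by lia.
      destruct (Nat.leb_spec k m); [|lia]. field. apply Hx; lia.
    + destruct (Compare_dec.le_lt_dec k n).
      * assert (Huk := Hu k ltac:(lia)).
        rewrite (emul_high m n u Ups Hu Hmn Hz) by lia. rewrite eone_high by lia.
        destruct (Nat.leb_spec k m); [lia|]. destruct (Nat.leb_spec (u k) m); [|lia].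
        field. apply Hx; lia.
      * rewrite (emul_out m n u Ups Hu Hmn Hz) by lia. rewrite eone_high by lia. reflexivity.
    + rewrite (emul_out m n u Ups Hu Hmn Hz) by lia. rewrite eone_high by lia. reflexivity.
Qed.
End Inv.

Open Scope R_scope.
Open Scope R_scope.

Definition cs (P Q t : R) : R := P * cos t + Q * sin t.
Definition dcs (P Q t : R) : R := Q * cos t - P * sin t.

Lemma is_derive_cs P Q t : is_derive (cs P Q) t (dcs P Q t).
Proof. unfold cs, dcs. auto_derive; auto. ring. Qed.

Lemma ftc0 (f f' : R -> R) a b : (forall x, is_derive f x (f' x)) -> (forall x, continuous f' x) ->
  RInt f' a b = f b - f a.
Proof.
  intros Hd Hc. apply is_RInt_unique. apply (is_RInt_derive f f'); auto.
Qed.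

Lemma const_of_deriv0 (f : R -> R) a b : (forall x, is_derive f x 0) -> f b = f a.
Proof.
  intros Hd. assert (H := ftc0 f (fun _ => 0) a b Hd (fun x => continuous_const _ x)).
  rewrite RInt_const in H. unfold scal in H; simpl in H. unfold mult in H; simpl in H. lra.
Qed.

Lemma periodic t : exists t', 0 <= t' <= 2 * PI /\ cos t = cos t' /\ sin t = sin t'.
Proof.
  assert (HP := PI_RGT_0).
  set (k := Int_part (t / (2 * PI))).
  destruct (base_Int_part (t / (2*PI))) as [H1 H2]. fold k in H1, H2. clearbody k.
  exists (t - 2 * IZR k * PI). split.
  - split.
    + assert (IZR k * (2 * PI) <= t / (2*PI) * (2 * PI)) by (apply Rmult_le_compat_r; lra).
      field_simplify in H; lra.
    + assert (t / (2*PI) * (2 * PI) < (IZR k + 1) * (2 * PI)) by (apply Rmult_lt_compat_r; lra).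
      field_simplify in H; lra.
  - destruct (ZArith_dec.Z_le_gt_dec 0 k) as [Hk|Hk].
    + destruct (IZN k Hk) as [nn ->]. rewrite <- INR_IZR_INZ.
      rewrite <- (cos_period (t - 2 * INR nn * PI) nn), <- (sin_period (t - 2 * INR nn * PI) nn).
      replace (t - 2 * INR nn * PI + 2 * INR nn * PI) with t by ring. auto.
    + assert (Hk' : (0 <= - k)%Z) by lia.
      destruct (IZN (-k) Hk') as [nn Hn].
      replace (IZR k) with (- INR nn) by (rewrite INR_IZR_INZ, <- Hn, opp_IZR; ring).
      replace (t - 2 * - INR nn * PI) with (t + 2 * INR nn * PI) by ring.
      rewrite cos_period, sin_period. auto.
Qed.

Definition clamp (t : R) : R := Rmin (2 * PI) (Rmax 0 t).

Lemma clamp_id t : 0 <= t <= 2 * PI -> clamp t = t.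
Proof. intros H. unfold clamp, Rmin, Rmax. repeat destruct Rle_dec; lra. Qed.

Lemma clamp_in t : 0 <= clamp t <= 2 * PI.
Proof. assert (HP := PI_RGT_0). unfold clamp, Rmin, Rmax. repeat destruct Rle_dec; lra. Qed.

Lemma clamp_lip t x : Rabs (clamp t - clamp x) <= Rabs (t - x).
Proof.
  assert (HP := PI_RGT_0).
  unfold clamp, Rmin, Rmax. repeat destruct Rle_dec; unfold Rabs; repeat destruct Rcase_abs; lra.
Qed.

Definition Dom (s : R) : Prop := 0 <= s <= 2 * PI.

Lemma clamp_cont (f : R -> R) :
  (forall t, 0 <= t <= 2 * PI -> filterlim f (within Dom (locally t)) (locally (f t))) ->
  forall x, continuity_pt (fun t => f (clamp t)) x.
Proof.
  intros Hf x. apply continuity_pt_filterlim.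
  eapply filterlim_comp; [|apply (Hf (clamp x) (clamp_in x))].
  intros P [eps HP]. exists eps. intros y Hy. apply HP; [|apply clamp_in].
  unfold ball in *; simpl in *. unfold AbsRing_ball, abs, minus, plus, opp in *; simpl in *.
  eapply Rle_lt_trans; [apply clamp_lip|]. exact Hy.
Qed.

Section Wind.
Variables P1 Q1 P2 Q2 : R.
Let c1 := cs P1 Q1. Let c2 := cs P2 Q2. Let d1 := dcs P1 Q1. Let d2 := dcs P2 Q2.
Hypothesis Spos : forall t, 0 < c1 t ^ 2 + c2 t ^ 2.

Definition gw t := (c1 t * d2 t - c2 t * d1 t) / (c1 t ^ 2 + c2 t ^ 2).
Definition hw t := (c1 t * d1 t + c2 t * d2 t) / (c1 t ^ 2 + c2 t ^ 2).

Lemma Sne t : cs P1 Q1 t ^ 2 + cs P2 Q2 t ^ 2 <> 0.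
Proof. specialize (Spos t). unfold c1, c2 in Spos. lra. Qed.

Ltac sne := match goal with |- ?a <> 0 => let H := fresh in assert (H := Sne); unfold cs in H; apply H end.

Lemma gw_cont t : continuous gw t.
Proof.
  apply (ex_derive_continuous (K := R_AbsRing) (V := R_NormedModule)). unfold gw, c1, c2, d1, d2, cs, dcs.
  auto_derive. repeat split; sne.
Qed.

Lemma hw_cont t : continuous hw t.
Proof.
  apply (ex_derive_continuous (K := R_AbsRing) (V := R_NormedModule)). unfold hw, c1, c2, d1, d2, cs, dcs.
  auto_derive. repeat split; sne.
Qed.

Definition Fw t := RInt gw 0 t.

Lemma Fw_deriv t : is_derive Fw t (gw t).
Proof.
  apply (is_derive_RInt (V := R_NormedModule) gw Fw 0 t).
  - apply filter_forall. intros b. unfold Fw. apply (RInt_correct (V := R_CompleteNormedModule)). apply (ex_RInt_continuous (V := R_CompleteNormedModule)).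
    intros; apply gw_cont.
  - apply gw_cont.
Qed.

Lemma hw_int : RInt hw 0 (2 * PI) = 0.
Proof.
  rewrite (ftc0 (fun t => ln (c1 t ^ 2 + c2 t ^ 2) / 2) hw).
  - unfold c1, c2, cs. rewrite cos_2PI, sin_2PI, cos_0, sin_0. lra.
  - intros x. assert (Sx := Spos x). unfold hw, c1, c2, d1, d2, cs, dcs in *. auto_derive.
    + simpl in *. nra.
    + field. simpl in *. repeat split; intro; nra.
  - apply hw_cont.
Qed.

Lemma K_zero t :
  let A := fun t => c1 t * cos (Fw t) + c2 t * sin (Fw t) in
  let B := fun t => c2 t * cos (Fw t) - c1 t * sin (Fw t) in
  A t * B 0 - B t * A 0 = 0.
Proof.
  intros A B.
  set (E := fun t => (A t * B 0 - B t * A 0) ^ 2 / (c1 t ^ 2 + c2 t ^ 2)).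
  assert (HE : forall x, is_derive E x 0).
  { intros x. assert (Sx := Spos x). assert (HF := Fw_deriv x).
    unfold E, A, B. unfold c1, c2, cs in *. auto_derive.
    - repeat split; try (exists (gw x); exact HF). simpl in *. intro; nra.
    - replace (Derive (fun x => Fw x) x) with (gw x) by (symmetry; apply is_derive_unique; exact HF).
      unfold gw, c1, c2, d1, d2, cs, dcs. field. simpl in *. intro; nra. }
  assert (H0 := const_of_deriv0 E 0 t HE).
  assert (HE0 : E 0 = 0). { unfold E. field. specialize (Spos 0). intro; lra. }
  rewrite HE0 in H0. unfold E in H0.
  assert (St := Spos t).
  assert (Hsq : (A t * B 0 - B t * A 0) ^ 2 = 0).
  { replace ((A t * B 0 - B t * A 0) ^ 2) with (((A t * B 0 - B t * A 0) ^ 2 / (c1 t ^ 2 + c2 t ^ 2)) * (c1 t ^ 2 + c2 t ^ 2)) by (field; lra).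
    rewrite H0. ring. }
  simpl in Hsq. nra.
Qed.

Lemma Fw_2PI (theta : R -> R)
  (Hc : forall t, 0 <= t <= 2 * PI ->
     filterlim theta (within (fun s => 0 <= s <= 2 * PI) (locally t)) (locally (theta t)))
  (Hp : forall t, 0 <= t <= 2 * PI ->
     c1 t = sqrt (c1 t ^ 2 + c2 t ^ 2) * cos (theta t) /\
     c2 t = sqrt (c1 t ^ 2 + c2 t ^ 2) * sin (theta t)) :
  Fw (2 * PI) = theta (2 * PI) - theta 0.
Proof.
  assert (HP := PI_RGT_0).
  set (phi := fun t => theta t - Fw t).
  assert (Hs : forall t, 0 <= t <= 2 * PI -> sin (phi 0 - phi t) = 0).
  { intros t Ht. assert (HK := K_zero t). simpl in HK.
    assert (St := Spos t). assert (S0 := Spos 0).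
    set (r := sqrt (c1 t ^ 2 + c2 t ^ 2)) in *.
    set (r0 := sqrt (c1 0 ^ 2 + c2 0 ^ 2)) in *.
    assert (Hr : 0 < r) by (apply sqrt_lt_R0; lra).
    assert (Hr0 : 0 < r0) by (apply sqrt_lt_R0; lra).
    destruct (Hp t Ht) as [E1 E2]. destruct (Hp 0 ltac:(lra)) as [E3 E4].
    fold r in E1, E2. fold r0 in E3, E4.
    rewrite E1, E2, E3, E4 in HK.
    assert (HK2 : r * r0 * sin (phi 0 - phi t) = 0).
    { match type of HK with ?L = 0 => transitivity L; [|exact HK] end. unfold phi. rewrite !sin_minus, !cos_minus. ring. }
    apply Rmult_integral in HK2. destruct HK2 as [HK2|HK2]; [|exact HK2].
    apply Rmult_integral in HK2. lra. }
  assert (HFc : forall t, 0 <= t <= 2 * PI ->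
     filterlim Fw (within (fun s => 0 <= s <= 2 * PI) (locally t)) (locally (Fw t))).
  { intros t Ht. eapply filterlim_filter_le_1; [apply filter_le_within|].
    apply (ex_derive_continuous (K := R_AbsRing) (V := R_NormedModule)).
    exists (gw t). apply Fw_deriv. }
  set (c0 := phi 0).
  set (Dt := fun t => theta (clamp t) - Fw (clamp t) - c0).
  assert (HD : continuity Dt).
  { intros x. unfold Dt.
    apply (continuity_pt_minus (fun t => theta (clamp t) - Fw (clamp t)) (fun _ => c0)).
    - apply (continuity_pt_minus (fun t => theta (clamp t)) (fun t => Fw (clamp t))).
      + apply clamp_cont. exact Hc.
      + apply clamp_cont. exact HFc.
    - apply continuity_pt_const. intros a b; reflexivity. }
  assert (HD0 : Dt 0 = 0).
  { unfold Dt, c0, phi. rewrite clamp_id by lra. ring. }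
  set (delta := Dt (2 * PI)).
  destruct (Req_dec delta 0) as [Hd|Hd].
  - unfold delta, Dt, c0, phi in Hd. rewrite clamp_id in Hd by lra.
    assert (F0 : Fw 0 = 0) by (unfold Fw; apply (RInt_point (V := R_CompleteNormedModule))).
    rewrite F0 in Hd. lra.
  - exfalso.
    set (y := Rmax (- (PI / 2)) (Rmin (PI / 2) delta)).
    assert (Hy : Rmin (Dt 0) (Dt (2 * PI)) <= y <= Rmax (Dt 0) (Dt (2 * PI))).
    { rewrite HD0. fold delta. unfold y, Rmin, Rmax. repeat destruct Rle_dec; lra. }
    destruct (IVT_gen Dt 0 (2 * PI) y HD Hy) as [x [Hx Hxy]].
    assert (Hx' : 0 <= x <= 2 * PI).
    { revert Hx. unfold Rmin, Rmax. repeat destruct Rle_dec; lra. }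
    assert (Hsx := Hs x Hx').
    unfold Dt in Hxy. rewrite clamp_id in Hxy by lra.
    replace (phi 0 - phi x) with (- y) in Hsx by (unfold c0 in Hxy; unfold phi in *; lra).
    rewrite sin_neg in Hsx.
    assert (Hyr : - (PI/2) <= y <= PI / 2 /\ y <> 0).
    { unfold y, Rmin, Rmax. repeat destruct Rle_dec; lra. }
    destruct (Rlt_or_le 0 y) as [Hy0|Hy0].
    + assert (0 < sin y) by (apply sin_gt_0; lra). lra.
    + assert (0 < sin (- y)) by (apply sin_gt_0; lra). rewrite sin_neg in H. lra.
Qed.

End Wind.

Open Scope C_scope.
Definition Zc (P1 Q1 P2 Q2 t : R) : C := (cs P1 Q1 t, cs P2 Q2 t).
Definition DZc (P1 Q1 P2 Q2 t : R) : C := (dcs P1 Q1 t, dcs P2 Q2 t).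

Lemma Spos_of P1 Q1 P2 Q2 :
  (forall t, 0 <= t <= 2 * PI -> Zc P1 Q1 P2 Q2 t <> 0) ->
  forall t, (0 < cs P1 Q1 t ^ 2 + cs P2 Q2 t ^ 2)%R.
Proof.
  intros H t. destruct (periodic t) as [t' [Ht' [Hc Hs]]].
  unfold cs. rewrite Hc, Hs. specialize (H t' Ht'). unfold Zc, cs in H.
  destruct (Rlt_or_le 0 ((P1 * cos t' + Q1 * sin t') ^ 2 + (P2 * cos t' + Q2 * sin t') ^ 2)%R) as [h|h]; auto.
  exfalso. apply H. simpl in h.
  set (a := (P1 * cos t' + Q1 * sin t')%R) in *. set (b := (P2 * cos t' + Q2 * sin t')%R) in *.
  rewrite !Rmult_1_r in h.
  assert (e1 : a = 0%R) by (apply Rsqr_0_uniq; unfold Rsqr; nra).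
  assert (e2 : b = 0%R) by (apply Rsqr_0_uniq; unfold Rsqr; nra).
  rewrite e1, e2. reflexivity.
Qed.

Lemma CInt_ext (f g : R -> C) a b : (forall t, f t = g t) -> CInt f a b = CInt g a b.
Proof. intros H. unfold CInt. f_equal; apply RInt_ext; intros; rewrite H; reflexivity. Qed.

Lemma wind_C P1 Q1 P2 Q2 :
  winds_once_positively (Zc P1 Q1 P2 Q2) ->
  CInt (fun t => DZc P1 Q1 P2 Q2 t * / Zc P1 Q1 P2 Q2 t) 0 (2 * PI) = (0%R, (2 * PI)%R).
Proof.
  intros [Hnz [theta [Hc [Hp H2]]]].
  assert (Spos := Spos_of P1 Q1 P2 Q2 Hnz).
  unfold CInt. f_equal.
  - transitivity (RInt (hw P1 Q1 P2 Q2) 0 (2 * PI)); [|apply (hw_int P1 Q1 P2 Q2 Spos)]. apply RInt_ext. intros x _.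
    specialize (Spos x). unfold hw, DZc, Zc, Cmult, Cinv. simpl fst. simpl snd.
    match goal with |- ?a = ?b => change (@eq R a b) end. field. simpl in Spos. lra.
  - transitivity (theta (2 * PI) - theta 0)%R; [|exact H2]. transitivity (Fw P1 Q1 P2 Q2 (2 * PI)); [|apply (Fw_2PI P1 Q1 P2 Q2 Spos theta Hc)].
    + unfold Fw. apply RInt_ext. intros x _.
      specialize (Spos x). unfold gw, DZc, Zc, Cmult, Cinv. simpl fst. simpl snd.
      match goal with |- ?a = ?b => change (@eq R a b) end. field. simpl in Spos. lra.
    + intros t Ht. specialize (Hp t Ht). unfold Zc, Cmod, Cmult, RtoC in Hp. simpl fst in Hp. simpl snd in Hp.
      injection Hp. intros e2 e1. split; [rewrite e1 at 1|rewrite e2 at 1]; match goal with |- ?a = ?b => change (@eq R a b) end; simpl; ring.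
Qed.

Ltac cunf := unfold Zc, DZc, cs, dcs, Cdiv, Cmult, Cinv, Cplus, Copp, Cminus in *; simpl fst in *; simpl snd in *.
Ltac req := match goal with |- ?a = ?b => change (@eq R a b) end.

Lemma nil_C C1 C2 C3 C4 D1 D2 D3 D4 :
  (forall t, (0 < cs D1 D2 t ^ 2 + cs D3 D4 t ^ 2)%R) ->
  CInt (fun t => DZc D1 D2 D3 D4 t * (- Zc C1 C2 C3 C4 t / (Zc D1 D2 D3 D4 t * Zc D1 D2 D3 D4 t))
                 + DZc C1 C2 C3 C4 t * / Zc D1 D2 D3 D4 t) 0 (2 * PI) = 0.
Proof.
  intros Spos.
  transitivity ((0%R, 0%R) : C); [|reflexivity]. unfold CInt. f_equal.
  - rewrite (ftc0 (fun t => (cs C1 C2 t * cs D1 D2 t + cs C3 C4 t * cs D3 D4 t) / (cs D1 D2 t ^ 2 + cs D3 D4 t ^ 2))%R).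
    + unfold cs. rewrite cos_2PI, sin_2PI, cos_0, sin_0. req. ring.
    + intros x. assert (Sx := Spos x). cunf. simpl in Sx. auto_derive.
      * intro; nra.
      * req. field. repeat split; intro; nra.
    + intros x. assert (Sx := Spos x).
      apply (ex_derive_continuous (K := R_AbsRing) (V := R_NormedModule)). cunf. simpl in Sx. auto_derive.
      repeat split; intro; nra.
  - rewrite (ftc0 (fun t => (cs C3 C4 t * cs D1 D2 t - cs C1 C2 t * cs D3 D4 t) / (cs D1 D2 t ^ 2 + cs D3 D4 t ^ 2))%R).
    + unfold cs. rewrite cos_2PI, sin_2PI, cos_0, sin_0. req. ring.
    + intros x. assert (Sx := Spos x). cunf. simpl in Sx. auto_derive.
      * intro; nra.
      * req. field. repeat split; intro; nra.
    + intros x. assert (Sx := Spos x).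
      apply (ex_derive_continuous (K := R_AbsRing) (V := R_NormedModule)). cunf. simpl in Sx. auto_derive.
      repeat split; intro; nra.
Qed.

Definition exC (f : R -> C) := ex_RInt (fun t => fst (f t)) 0 (2 * PI) /\ ex_RInt (fun t => snd (f t)) 0 (2 * PI).

Lemma exC_ext f g : (forall t, f t = g t) -> exC g -> exC f.
Proof.
  intros H [H1 H2]. split.
  - eapply ex_RInt_ext; [|exact H1]. intros; simpl; rewrite H; reflexivity.
  - eapply ex_RInt_ext; [|exact H2]. intros; simpl; rewrite H; reflexivity.
Qed.

Lemma RInt_lin (u v : R -> R) (al be : R) :
  ex_RInt u 0 (2 * PI) -> ex_RInt v 0 (2 * PI) ->
  RInt (fun t => al * u t + be * v t)%R 0 (2 * PI) = (al * RInt u 0 (2 * PI) + be * RInt v 0 (2 * PI))%R.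
Proof.
  intros Hu Hv. apply is_RInt_unique.
  apply (is_RInt_plus (V := R_NormedModule) (fun t => al * u t)%R (fun t => be * v t)%R).
  - apply (is_RInt_scal (V := R_NormedModule) u). apply (RInt_correct (V := R_CompleteNormedModule)). exact Hu.
  - apply (is_RInt_scal (V := R_NormedModule) v). apply (RInt_correct (V := R_CompleteNormedModule)). exact Hv.
Qed.

Lemma ex_RInt_lin (u v : R -> R) (al be : R) :
  ex_RInt u 0 (2 * PI) -> ex_RInt v 0 (2 * PI) ->
  ex_RInt (fun t => al * u t + be * v t)%R 0 (2 * PI).
Proof.
  intros Hu Hv.
  apply (ex_RInt_plus (V := R_NormedModule) (fun t => al * u t)%R (fun t => be * v t)%R).
  - apply (ex_RInt_scal (V := R_NormedModule) u). exact Hu.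
  - apply (ex_RInt_scal (V := R_NormedModule) v). exact Hv.
Qed.

Lemma CInt_plus f g : exC f -> exC g -> CInt f 0 (2 * PI) + CInt g 0 (2 * PI) = CInt (fun t => f t + g t) 0 (2 * PI).
Proof.
  intros [F1 F2] [G1 G2]. unfold CInt.
  rewrite (RInt_ext (fun t => fst (f t + g t)) (fun t => 1 * fst (f t) + 1 * fst (g t))%R)
      by (intros; unfold Cplus; simpl; ring).
  rewrite (RInt_ext (fun t => snd (f t + g t)) (fun t => 1 * snd (f t) + 1 * snd (g t))%R)
      by (intros; unfold Cplus; simpl; ring).
  rewrite !RInt_lin by auto. unfold Cplus. simpl. f_equal; req; ring.
Qed.

Lemma exC_plus f g : exC f -> exC g -> exC (fun t => f t + g t).
Proof.
  intros [F1 F2] [G1 G2]. split.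
  - eapply ex_RInt_ext; [|apply (ex_RInt_lin _ _ 1 1 F1 G1)]. intros; unfold Cplus; simpl; ring.
  - eapply ex_RInt_ext; [|apply (ex_RInt_lin _ _ 1 1 F2 G2)]. intros; unfold Cplus; simpl; ring.
Qed.

Lemma CInt_scal c f : exC f -> c * CInt f 0 (2 * PI) = CInt (fun t => c * f t) 0 (2 * PI).
Proof.
  intros [F1 F2]. unfold CInt.
  rewrite (RInt_ext (fun t => fst (c * f t)) (fun t => fst c * fst (f t) + (- snd c) * snd (f t))%R)
      by (intros; unfold Cmult; simpl; ring).
  rewrite (RInt_ext (fun t => snd (c * f t)) (fun t => fst c * snd (f t) + snd c * fst (f t))%R)
      by (intros; unfold Cmult; simpl; ring).
  rewrite !RInt_lin by auto. unfold Cmult. simpl. f_equal; req; ring.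
Qed.

Lemma exC_scal c f : exC f -> exC (fun t => c * f t).
Proof.
  intros [F1 F2]. split.
  - eapply ex_RInt_ext; [|apply (ex_RInt_lin _ _ (fst c) (- snd c) F1 F2)]. intros; unfold Cmult; simpl; ring.
  - eapply ex_RInt_ext; [|apply (ex_RInt_lin _ _ (fst c) (snd c) F2 F1)]. intros; unfold Cmult; simpl; ring.
Qed.

Lemma exC_1 A B P1 Q1 P2 Q2 : (forall t, (0 < cs P1 Q1 t ^ 2 + cs P2 Q2 t ^ 2)%R) ->
  exC (fun t => RtoC (dcs A B t) * / Zc P1 Q1 P2 Q2 t).
Proof.
  intros Spos. split; apply (ex_RInt_continuous (V := R_CompleteNormedModule)); intros x _;
  assert (Sx := Spos x);
  apply (ex_derive_continuous (K := R_AbsRing) (V := R_NormedModule)); unfold RtoC; cunf; simpl in Sx; auto_derive;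
  repeat split; intro; nra.
Qed.

Lemma exC_2 A B C1 C2 C3 C4 D1 D2 D3 D4 : (forall t, (0 < cs D1 D2 t ^ 2 + cs D3 D4 t ^ 2)%R) ->
  exC (fun t => RtoC (dcs A B t) * (- Zc C1 C2 C3 C4 t / (Zc D1 D2 D3 D4 t * Zc D1 D2 D3 D4 t))).
Proof.
  intros Spos. split; apply (ex_RInt_continuous (V := R_CompleteNormedModule)); intros x _;
  assert (Sx := Spos x);
  apply (ex_derive_continuous (K := R_AbsRing) (V := R_NormedModule)); unfold RtoC; cunf; simpl in Sx; auto_derive;
  repeat split; intro; nra.
Qed.

Open Scope R_scope.
Open Scope C_scope.
Open Scope R_scope.
Open Scope C_scope.

Definition zrow (Rad p1 p2 p3 q1 q2 q3 : R) (e al be : C) :=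
  Zc (Rad*(p1*fst e + p2*fst al + p3*fst be))%R (Rad*(q1*fst e + q2*fst al + q3*fst be))%R
     (Rad*(p1*snd e + p2*snd al + p3*snd be))%R (Rad*(q1*snd e + q2*snd al + q3*snd be))%R.
Definition dzrow (Rad p1 p2 p3 q1 q2 q3 : R) (e al be : C) :=
  DZc (Rad*(p1*fst e + p2*fst al + p3*fst be))%R (Rad*(q1*fst e + q2*fst al + q3*fst be))%R
     (Rad*(p1*snd e + p2*snd al + p3*snd be))%R (Rad*(q1*snd e + q2*snd al + q3*snd be))%R.

Lemma zrow_eq (Rad p1 p2 p3 q1 q2 q3 : R) (e al be : C) (t : R) :
  RtoC (Rad * (cos t * p1 + sin t * q1))%R * e + (RtoC (Rad * (cos t * p2 + sin t * q2))%R * al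
   + RtoC (Rad * (cos t * p3 + sin t * q3))%R * be) = zrow Rad p1 p2 p3 q1 q2 q3 e al be t.
Proof.
  destruct e as [e1 e2], al as [a1 a2], be as [b1 b2].
  unfold zrow, Zc, cs, RtoC, Cmult, Cplus; simpl. f_equal; req; ring.
Qed.

Lemma Derive_g (Rad p q t : R) : Derive (fun t => Rad * (cos t * p + sin t * q))%R t = dcs (Rad * p)%R (Rad * q)%R t.
Proof.
  apply is_derive_unique. unfold dcs. auto_derive; auto. req. ring.
Qed.

Lemma dzrow_eq (Rad p1 p2 p3 q1 q2 q3 : R) (e al be : C) (t : R) :
  RtoC (dcs (Rad*p1)%R (Rad*q1)%R t) * e + (RtoC (dcs (Rad*p2)%R (Rad*q2)%R t) * al
   + RtoC (dcs (Rad*p3)%R (Rad*q3)%R t) * be) = dzrow Rad p1 p2 p3 q1 q2 q3 e al be t.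
Proof.
  destruct e as [e1 e2], al as [a1 a2], be as [b1 b2].
  unfold dzrow, DZc, dcs, RtoC, Cmult, Cplus; simpl. f_equal; req; ring.
Qed.

Lemma Lint_eq (F G : R -> C) (Rad p q : R) : (forall t, F t = G t) ->
  line_int F (fun t => Rad * (cos t * p + sin t * q))%R =
  CInt (fun t => RtoC (dcs (Rad*p)%R (Rad*q)%R t) * G t) 0 (2 * PI).
Proof.
  intros H. unfold line_int. apply CInt_ext. intros t. rewrite H, Derive_g. reflexivity.
Qed.

Lemma zeta_k m n a b (x y z : R) k : (1 <= k <= n)%nat ->
  zeta m (vec n a) (vec n b) x y z k = RtoC x * eone m k + (RtoC y * a k + RtoC z * b k).
Proof.
  intros Hk. unfold zeta, eadd, escal, vec.
  replace (inrange n k) with true; [reflexivity|].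
  unfold inrange. destruct (Nat.leb_spec 1 k); destruct (Nat.leb_spec k n); simpl; try lia; reflexivity.
Qed.

Lemma vec_k n a k : (1 <= k <= n)%nat -> vec n a k = a k.
Proof.
  intros Hk. unfold vec. replace (inrange n k) with true; [reflexivity|].
  unfold inrange. destruct (Nat.leb_spec 1 k); destruct (Nat.leb_spec k n); simpl; try lia; reflexivity.
Qed.

Lemma basis_ne j k : j <> k -> basis j k = 0.
Proof. intros H. unfold basis. destruct (Nat.eqb_spec k j); [lia|reflexivity]. Qed.
Lemma basis_eq k : basis k k = 1.
Proof. unfold basis. rewrite Nat.eqb_refl. reflexivity. Qed.

Lemma Zc_nz P1 Q1 P2 Q2 t : (0 < cs P1 Q1 t ^ 2 + cs P2 Q2 t ^ 2)%R -> Zc P1 Q1 P2 Q2 t <> 0.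
Proof.
  intros H E. unfold Zc in E. injection E. intros e2 e1. rewrite e1, e2 in H. simpl in H. lra.
Qed.

Definition rowpos (Rad p1 p2 p3 q1 q2 q3 : R) (e al be : C) :=
  forall t, (0 < cs (Rad*(p1*fst e + p2*fst al + p3*fst be)) (Rad*(q1*fst e + q2*fst al + q3*fst be)) t ^ 2
           + cs (Rad*(p1*snd e + p2*snd al + p3*snd be)) (Rad*(q1*snd e + q2*snd al + q3*snd be)) t ^ 2)%R.

Section Rows.
Variables (Rad p1 p2 p3 q1 q2 q3 : R).

Lemma rowpos_of e al be : winds_once_positively (zrow Rad p1 p2 p3 q1 q2 q3 e al be) ->
  rowpos Rad p1 p2 p3 q1 q2 q3 e al be.
Proof. intros [H _]. unfold rowpos. apply Spos_of. exact H. Qed.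

Lemma zrow_nz e al be t : rowpos Rad p1 p2 p3 q1 q2 q3 e al be -> zrow Rad p1 p2 p3 q1 q2 q3 e al be t <> 0.
Proof. intros H. apply Zc_nz. apply H. Qed.

Lemma exC_1r (A B : R) e al be : rowpos Rad p1 p2 p3 q1 q2 q3 e al be ->
  exC (fun t => RtoC (dcs A B t) * / zrow Rad p1 p2 p3 q1 q2 q3 e al be t).
Proof. intros H. apply exC_1. exact H. Qed.

Lemma exC_2r (A B : R) e al be e' al' be' : rowpos Rad p1 p2 p3 q1 q2 q3 e al be ->
  exC (fun t => RtoC (dcs A B t) * (- zrow Rad p1 p2 p3 q1 q2 q3 e' al' be' t /
        (zrow Rad p1 p2 p3 q1 q2 q3 e al be t * zrow Rad p1 p2 p3 q1 q2 q3 e al be t))).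
Proof. intros H. apply exC_2. exact H. Qed.

Lemma wind_r e al be : winds_once_positively (zrow Rad p1 p2 p3 q1 q2 q3 e al be) ->
  CInt (fun t => dzrow Rad p1 p2 p3 q1 q2 q3 e al be t * / zrow Rad p1 p2 p3 q1 q2 q3 e al be t) 0 (2 * PI)
  = (0%R, (2 * PI)%R).
Proof. intros H. apply wind_C. exact H. Qed.

Lemma nil_r e al be e' al' be' : rowpos Rad p1 p2 p3 q1 q2 q3 e al be ->
  CInt (fun t => dzrow Rad p1 p2 p3 q1 q2 q3 e al be t *
        (- zrow Rad p1 p2 p3 q1 q2 q3 e' al' be' t /
          (zrow Rad p1 p2 p3 q1 q2 q3 e al be t * zrow Rad p1 p2 p3 q1 q2 q3 e al be t))
      + dzrow Rad p1 p2 p3 q1 q2 q3 e' al' be' t * / zrow Rad p1 p2 p3 q1 q2 q3 e al be t) 0 (2 * PI) = 0.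
Proof. intros H. apply nil_C. exact H. Qed.
End Rows.
Theorem theorem6
  (m n : nat) (Hm : (1 <= m)%nat) (Hmn : (m <= n)%nat)
  (u : nat -> nat) (Hu : forall s, (m < s <= n)%nat -> (1 <= u s <= m)%nat)
  (Ups : nat -> nat -> nat -> C)
  (* A_n^m is commutative and associative *)
  (Hcomm : forall x y : elt, emul m n u Ups x y = emul m n u Ups y x)
  (Hassoc : forall x y w : elt,
     emul m n u Ups (emul m n u Ups x y) w = emul m n u Ups x (emul m n u Ups y w))
  (* N is a zero algebra *)
  (Hzero : forall r s, (m < r <= n)%nat -> (m < s <= n)%nat ->
     emul m n u Ups (basis r) (basis s) = ezero)
  (a b : nat -> C)
  (* e1 = 1, e2 = vec n a, e3 = vec n b linearly independent over R *)
  (Hindep : forall x y z : R, zeta m (vec n a) (vec n b) x y z = ezero ->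
     x = 0%R /\ y = 0%R /\ z = 0%R)
  (* standing assumption f_u(E_3) = C *)
  (Hsurj : forall v, (1 <= v <= m)%nat -> forall w : C,
     exists x y z : R, fu (zeta m (vec n a) (vec n b) x y z) v = w)
  (* the circle C' : t |-> Rad (cos t p + sin t q), t in [0, 2 pi] *)
  (Rad : R) (HRad : (0 < Rad)%R)
  (p1 p2 p3 q1 q2 q3 : R)
  (Hp : (p1 * p1 + p2 * p2 + p3 * p3 = 1)%R)
  (Hq : (q1 * q1 + q2 * q2 + q3 * q3 = 1)%R)
  (Hpq : (p1 * q1 + p2 * q2 + p3 * q3 = 0)%R)
  (* each f_u(C) is a positively oriented Jordan curve bounding a domain containing 0 *)
  (HC : forall v, (1 <= v <= m)%nat ->
     let w := fun t : R =>
       fu (zeta m (vec n a) (vec n b)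
             (Rad * (cos t * p1 + sin t * q1))
             (Rad * (cos t * p2 + sin t * q2))
             (Rad * (cos t * p3 + sin t * q3))) v in
     jordan_on w /\ winds_once_positively w) :
  hyper_int m n u Ups (vec n a) (vec n b)
    (fun t : R => einv m n u Ups
       (zeta m (vec n a) (vec n b)
          (Rad * (cos t * p1 + sin t * q1))
          (Rad * (cos t * p2 + sin t * q2))
          (Rad * (cos t * p3 + sin t * q3))))
    (fun t : R => Rad * (cos t * p1 + sin t * q1))%R
    (fun t : R => Rad * (cos t * p2 + sin t * q2))%R
    (fun t : R => Rad * (cos t * p3 + sin t * q3))%R
  = escal (2 * RtoC PI * Ci) (eone m).
Proof.
  assert (Hz : forall r s k, (m < r <= n)%nat -> (m < s <= n)%nat -> basis_mul m n u Ups r s k = 0).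
  { intros r s k Hr Hs. rewrite <- (emul_basis m n u Ups Hmn r s k) by lia. rewrite (Hzero r s Hr Hs). reflexivity. }
  assert (Hw : forall v, (1 <= v <= m)%nat ->
    winds_once_positively (zrow Rad p1 p2 p3 q1 q2 q3 1 (a v) (b v))).
  { intros v Hv. destruct (HC v Hv) as [_ Hwv].
    match type of Hwv with winds_once_positively ?w => replace (zrow Rad p1 p2 p3 q1 q2 q3 1 (a v) (b v)) with w end;
      [exact Hwv|].
    apply functional_extensionality; intros t. cbv beta. unfold fu. rewrite (zeta_k m n a b) by lia. rewrite eone_low by lia.
    apply zrow_eq. }
  assert (Sp : forall v, (1 <= v <= m)%nat -> rowpos Rad p1 p2 p3 q1 q2 q3 1 (a v) (b v)).
  { intros v Hv. apply rowpos_of. apply Hw. exact Hv. }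
  assert (ZT : forall t k, (1 <= k <= n)%nat ->
     zeta m (vec n a) (vec n b) (Rad * (cos t * p1 + sin t * q1))%R (Rad * (cos t * p2 + sin t * q2))%R
       (Rad * (cos t * p3 + sin t * q3))%R k = zrow Rad p1 p2 p3 q1 q2 q3 (eone m k) (a k) (b k) t).
  { intros t k Hk. rewrite zeta_k by lia. apply zrow_eq. }
  assert (Nz : forall t v, (1 <= v <= m)%nat ->
     zeta m (vec n a) (vec n b) (Rad * (cos t * p1 + sin t * q1))%R (Rad * (cos t * p2 + sin t * q2))%R
       (Rad * (cos t * p3 + sin t * q3))%R v <> 0).
  { intros t v Hv. rewrite ZT by lia. rewrite eone_low by lia. apply zrow_nz. apply Sp. exact Hv. }
  assert (Inv := fun t => einv_spec m n u Ups Hu Hmn Hz _ (Nz t)).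
  assert (LIl : forall j, (1 <= j <= m)%nat -> forall p q : R,
    line_int (fun t : R => einv m n u Ups (zeta m (vec n a) (vec n b) (Rad * (cos t * p1 + sin t * q1))%R
            (Rad * (cos t * p2 + sin t * q2))%R (Rad * (cos t * p3 + sin t * q3))%R) j)
      (fun t : R => (Rad * (cos t * p + sin t * q))%R) =
    CInt (fun t => RtoC (dcs (Rad*p)%R (Rad*q)%R t) * / zrow Rad p1 p2 p3 q1 q2 q3 1 (a j) (b j) t) 0 (2 * PI)).
  { intros j Hj p q. apply Lint_eq. intros t. rewrite (proj1 (Inv t)) by lia.
    rewrite ZT by lia. rewrite eone_low by lia. reflexivity. }
  assert (LIh : forall j, (m < j <= n)%nat -> forall p q : R,
    line_int (fun t : R => einv m n u Ups (zeta m (vec n a) (vec n b) (Rad * (cos t * p1 + sin t * q1))%R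
            (Rad * (cos t * p2 + sin t * q2))%R (Rad * (cos t * p3 + sin t * q3))%R) j)
      (fun t : R => (Rad * (cos t * p + sin t * q))%R) =
    CInt (fun t => RtoC (dcs (Rad*p)%R (Rad*q)%R t) * (- zrow Rad p1 p2 p3 q1 q2 q3 0 (a j) (b j) t /
       (zrow Rad p1 p2 p3 q1 q2 q3 1 (a (u j)) (b (u j)) t * zrow Rad p1 p2 p3 q1 q2 q3 1 (a (u j)) (b (u j)) t))) 0 (2 * PI)).
  { intros j Hj p q. assert (Huj := Hu j Hj). apply Lint_eq. intros t. rewrite (proj2 (Inv t)) by lia.
    rewrite !ZT by lia. rewrite (eone_low m (u j)) by lia. rewrite (eone_high m j) by lia. reflexivity. }
  apply functional_extensionality. intros k. unfold hyper_int.
  destruct (Compare_dec.le_lt_dec 1 k) as [Hk1|Hk1]; [destruct (Compare_dec.le_lt_dec k m) as [Hkm|Hkm]|].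
  -
    etransitivity; [apply (sumC_single n _ k ltac:(lia))|].
    1:{ intros j Hj Hjk. rewrite !(emul_low m n u Ups Hu Hmn Hz) by lia. rewrite basis_ne by auto. ring. }
    rewrite !(emul_low m n u Ups Hu Hmn Hz) by lia. rewrite basis_eq, !vec_k by lia.
    rewrite !LIl by lia. unfold escal. rewrite eone_low by lia.
    match goal with |- ?c0 * CInt ?f1 _ _ + ?al * ?c1 * CInt ?f2 _ _ + ?be * ?c2 * CInt ?f3 _ _ = _ =>
      assert (E1 : exC f1) by (apply exC_1r; apply Sp; lia);
      assert (E2 : exC f2) by (apply exC_1r; apply Sp; lia);
      assert (E3 : exC f3) by (apply exC_1r; apply Sp; lia);
      transitivity (CInt f1 0 (2*PI) + (al * CInt f2 0 (2*PI) + be * CInt f3 0 (2*PI))); [ring|];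
      rewrite (CInt_scal al f2 E2), (CInt_scal be f3 E3);
      rewrite (CInt_plus (fun t => al * f2 t) (fun t => be * f3 t) (exC_scal _ _ E2) (exC_scal _ _ E3));
      rewrite (CInt_plus f1 _ E1 (exC_plus _ _ (exC_scal _ _ E2) (exC_scal _ _ E3)));
      rewrite (CInt_ext _ (fun t => dzrow Rad p1 p2 p3 q1 q2 q3 1 al be t * / zrow Rad p1 p2 p3 q1 q2 q3 1 al be t))
    end.
    2:{ intros t. rewrite <- dzrow_eq. ring. }
    rewrite wind_r by (apply Hw; lia).
    unfold Cmult, Ci, RtoC. simpl. f_equal; req; ring.
  - destruct (Compare_dec.le_lt_dec k n) as [Hkn|Hkn].
    + assert (Huk := Hu k ltac:(lia)).
      etransitivity; [apply (sumC_two n _ (u k) k ltac:(lia) ltac:(lia) ltac:(lia))|].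
      1:{ intros j Hj Hj1 Hj2. rewrite !(emul_high m n u Ups Hu Hmn Hz) by lia.
          rewrite !(basis_ne j) by auto. ring. }
      cbv beta. rewrite !(emul_high m n u Ups Hu Hmn Hz) by lia.
      rewrite (basis_ne (u k) k) by lia. rewrite (basis_ne k (u k)) by lia. rewrite !basis_eq.
      rewrite !vec_k by lia.
      rewrite !(LIl (u k)) by lia. rewrite !(LIh k) by lia.
      unfold escal. rewrite (eone_high m k) by lia.
      match goal with |- ?c0 * CInt ?g1 _ _ + ?c1 * CInt ?g2 _ _ + ?c2 * CInt ?g3 _ _
          + (?c3 * CInt ?f1 _ _ + ?c4 * CInt ?f2 _ _ + ?c5 * CInt ?f3 _ _) = _ =>
        assert (G2 : exC g2) by (apply exC_1r; apply Sp; lia);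
        assert (G3 : exC g3) by (apply exC_1r; apply Sp; lia);
        assert (F1 : exC f1) by (apply exC_2r; apply Sp; lia);
        assert (F2 : exC f2) by (apply exC_2r; apply Sp; lia);
        assert (F3 : exC f3) by (apply exC_2r; apply Sp; lia);
        transitivity (CInt f1 0 (2*PI) + (a (u k) * CInt f2 0 (2*PI) + (b (u k) * CInt f3 0 (2*PI)
          + (a k * CInt g2 0 (2*PI) + b k * CInt g3 0 (2*PI))))); [ring|];
        rewrite (CInt_scal (a (u k)) f2 F2), (CInt_scal (b (u k)) f3 F3), (CInt_scal (a k) g2 G2), (CInt_scal (b k) g3 G3);
        rewrite (CInt_plus _ _ (exC_scal _ _ G2) (exC_scal _ _ G3));
        rewrite (CInt_plus _ _ (exC_scal _ _ F3) (exC_plus _ _ (exC_scal _ _ G2) (exC_scal _ _ G3)));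
        rewrite (CInt_plus _ _ (exC_scal _ _ F2) (exC_plus _ _ (exC_scal _ _ F3) (exC_plus _ _ (exC_scal _ _ G2) (exC_scal _ _ G3))));
        rewrite (CInt_plus _ _ F1 (exC_plus _ _ (exC_scal _ _ F2) (exC_plus _ _ (exC_scal _ _ F3) (exC_plus _ _ (exC_scal _ _ G2) (exC_scal _ _ G3)))))
      end.
      match goal with |- CInt _ _ _ = ?r =>
        transitivity (CInt (fun t => dzrow Rad p1 p2 p3 q1 q2 q3 1 (a (u k)) (b (u k)) t *
        (- zrow Rad p1 p2 p3 q1 q2 q3 0 (a k) (b k) t /
          (zrow Rad p1 p2 p3 q1 q2 q3 1 (a (u k)) (b (u k)) t * zrow Rad p1 p2 p3 q1 q2 q3 1 (a (u k)) (b (u k)) t))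
      + dzrow Rad p1 p2 p3 q1 q2 q3 0 (a k) (b k) t * / zrow Rad p1 p2 p3 q1 q2 q3 1 (a (u k)) (b (u k)) t) 0 (2 * PI))
      end.
      * apply CInt_ext. intros t. rewrite <- !dzrow_eq. ring.
      * rewrite nil_r by (apply Sp; lia). ring.
    + rewrite sumC_zero.
      { unfold escal. rewrite (eone_high m k) by lia. ring. }
      intros j Hj. rewrite !(emul_out m n u Ups Hu Hmn Hz) by lia. rewrite (basis_ne j k) by lia. ring.
  - rewrite sumC_zero.
    { unfold escal. rewrite (eone_high m k) by lia. ring. }
    intros j Hj. rewrite !(emul_out m n u Ups Hu Hmn Hz) by lia. rewrite (basis_ne j k) by lia. ring.
Qed.
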